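(* Let $A$ be a finite alphabet, $E\subseteq W(A)$ and $\vec s\in V^\infty(A)$ such that $E$ is large in $\vec s$. Then there exists an infinite extracted subsequence $\vec t=(t_n(x))_{n=0}^\infty$ of $\vec s$ such that $\langle\vec t\rangle_c\subseteq E$.
   Context: $\mathbb N=\{0,1,2,\dots\}$. Let $A$ be a finite nonempty alphabet. $W(A)$ denotes the set of all finite words over $A$, including the empty word; words are concatenated by juxtaposition. Fix a symbol $x\notin A$. A variable word over $A$ is a finite word over $A\cup\{x\}$ in which $x$ occurs at least once; $V(A)$ is the set of variable words. For $s(x)\in V(A)$ and $a\in A\cup\{x\}$, $s(a)$ is obtained by replacing every occurrence of $x$ by $a$. $V^\infty(A)$ is the set of infinite sequences of variable words. For a sequence $(s_n(x))_{n\in I}$ of variable words indexed by a set $I\subseteq\mathbb N$ that is either a finite interval or of the form $\{m,m+1,\dots\}$: the constant span $\langle (s_n(x))_{n\in I}\rangle_c$ is the set of all words $s_{l_0}(a_0)s_{l_1}(a_1)\cdots s_{l_j}(a_j)$ with $j\ge 0$, $l_0<\dots<l_j$ in $I$ and $a_0,\dots,a_j\in A$; the variable span $\langle (s_n(x))_{n\in I}\rangle_v$ is the set of all words $s_{l_0}(a_0)\cdots s_{l_j}(a_j)$ with $j\ge0$, $l_0<\dots<l_j$ in $I$, $a_0,\dots,a_j\in A\cup\{x\}$ and at least one $a_i=x$. Extracted subsequences: let $\vec s=(s_n(x))_{n=0}^\infty\in V^\infty(A)$. A finite sequence $(t_n(x))_{n=0}^l$ of variable words is an extracted subsequence of $\vec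 s$ if there exist integers $0=m_0<m_1<\dots<m_{l+1}$ with $t_i(x)\in\langle (s_n(x))_{n=m_i}^{m_{i+1}-1}\rangle_v$ for all $0\le i\le l$. An infinite sequence $\vec t=(t_n(x))_{n=0}^\infty$ is an extracted subsequence of $\vec s$ if every initial segment $(t_n(x))_{n=0}^l$ is a finite extracted subsequence of $\vec s$. We write $\vec t\le\vec s$. A set $E\subseteq W(A)$ is large in $\vec s\in V^\infty(A)$ if $E\cap\langle\vec w\rangle_c\neq\emptyset$ for every infinite extracted subsequence $\vec w$ of $\vec s$. *)

(* Defs.v *)
From mathcomp Require Import all_boot.
Set Implicit Arguments. Unset Strict Implicit. Unset Printing Implicit Defensive.

(* Words over A: seq A.  Words over A ∪ {x}: seq (option A), with None = x.
   A variable word is a word over option A containing None. *)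
Section Words.
Variable A : finType.

Definition is_varword (s : seq (option A)) : bool := None \in s.

Definition csub (s : seq (option A)) (a : A) : seq A := map (fun o => odflt a o) s.

Definition vsub (s : seq (option A)) (a : option A) : seq (option A) :=
  map (fun o => if o is Some b then Some b else a) s.

Definition cspan (s : nat -> seq (option A)) (I : pred nat) (w : seq A) : Prop :=
  exists (ls : seq nat) (as_ : seq A),
    size ls = size as_ /\ 0 < size ls /\ sorted ltn ls /\ all I ls /\
    w = flatten [seq csub (s p.1) p.2 | p <- zip ls as_].

Definition vspan (s : nat -> seq (option A)) (I : pred nat) (w : seq (option A)) : Prop :=
  exists (ls : seq nat) (as_ : seq (option A)),
    size ls = size as_ /\ 0 < size ls /\ sorted ltn ls /\ all I ls /\
    None \in as_ /\
    w = flatten [seq vsub (s p.1) p.2 | p <- zip ls as_].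

Definition fin_extracted (t s : nat -> seq (option A)) (l : nat) : Prop :=
  exists m : nat -> nat, m 0 = 0 /\
    (forall i, i <= l -> m i < m i.+1) /\
    (forall i, i <= l -> vspan s (fun n => (m i <= n) && (n < m i.+1)) (t i)).

Definition extracted (t s : nat -> seq (option A)) : Prop :=
  forall l, fin_extracted t s l.

Definition large (E : seq A -> Prop) (s : nat -> seq (option A)) : Prop :=
  forall w, extracted w s -> exists u, E u /\ cspan w predT u.

End Words.

(* Main.v *)
Require Import Defs.
From mathcomp Require Import all_boot.
From mathcomp Require boolp classical_sets filter.
From mathcomp Require Import zify.
From Stdlib Require Import Lia ClassicalEpsilon ProofIrrelevance FunctionalExtensionality PropExtensionality Classical.

Set Implicit Arguments. Unset Strict Implicit. Unset Printing Implicit Defensive.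

Section UF.
Variable A : finType.
Definition S := seq (nat * option A).

Definition idxs (x : S) := map fst x.
Definition hd_idx (x : S) := head 0 (idxs x).
Definition lst_idx (x : S) := last 0 (idxs x).
Definition wf (x : S) : bool := (x != [::]) && sorted ltn (idxs x).
Definition tail n (x : S) : Prop := wf x /\ n < hd_idx x.
Definition ltw (x y : S) : bool := lst_idx x < hd_idx y.
Definition shift (x : S) (B : S -> Prop) : S -> Prop := fun y => ltw x y /\ B (x ++ y).

Unset Implicit Arguments.
Record uf := UF {
  F :> (S -> Prop) -> Prop;
  ufS : forall B C : S -> Prop, F B -> (forall x, B x -> C x) -> F C;
  ufI : forall B C : S -> Prop, F B -> F C -> F (fun x => B x /\ C x);
  uf0 : F (fun _ => False) -> False;
  ufU : forall B, F B \/ F (fun x => ~ B x);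
  ufT : forall n, F (tail n)
}.
Set Implicit Arguments.
Arguments ufS {u B C}. Arguments ufI {u B C}.


Lemma uf_eq (p r : uf) : (forall B, p B <-> r B) -> p = r.
Proof.
case: p r => Fp S1 I1 O1 U1 T1 [Fr S2 I2 O2 U2 T2] /= H.
have E : Fp = Fr.
  apply: functional_extensionality => B; apply: propositional_extensionality; exact: H.
subst Fr; f_equal; apply: proof_irrelevance.
Qed.

Lemma ufTT (p : uf) : p (fun _ => True).
Proof. by apply: ufS (ufT p 0) _. Qed.

Lemma ufE (p : uf) B : p B -> exists x, B x.
Proof.
move=> pB; apply: NNPP => nE; apply: (uf0 p); apply: ufS pB _ => x Bx; apply: nE; by exists x.
Qed.

Lemma ufN (p : uf) B : p B -> p (fun x => ~ B x) -> False.
Proof. move=> h1 h2; apply: (uf0 p); apply: ufS (ufI h1 h2) _ => x [] //. Qed.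

Lemma ufV (p : uf) B B' : (forall x, B x <-> B' x) -> p B -> p B'.
Proof. by move=> H pB; apply: ufS pB _ => x /H. Qed.

Lemma ufI3 (p : uf) B C D : p B -> p C -> p D -> p (fun x => B x /\ C x /\ D x).
Proof. by move=> h1 h2 h3; apply: ufI h1 (ufI h2 h3). Qed.

Lemma uf_sub_eq (p r : uf) : (forall B, p B -> r B) -> p = r.
Proof.
move=> H; apply: uf_eq => B; split; first exact: H.
move=> rB; case: (ufU p B) => // /H nB; case: (ufN rB nB).
Qed.

Lemma uf_all (p : uf) (B : A -> S -> Prop) :
  (forall b, p (B b)) -> p (fun x => forall b, B b x).
Proof.
move=> H.
have L : forall l : seq A, p (fun x => forall b, b \in l -> B b x).
  elim=> [|a l IH]; first by apply: ufS (ufTT p) _.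
  refine (ufS (ufI (H a) IH) _) => x [h1 h2] b; rewrite inE => /orP[/eqP -> //|]; exact: h2.
by apply: ufS (L (enum A)) _ => x h b; apply: h; rewrite mem_enum.
Qed.

Lemma hd_cat x y : x != [::] -> hd_idx (x ++ y) = hd_idx x.
Proof. by case: x. Qed.

Lemma lst_cat x y : y != [::] -> lst_idx (x ++ y) = lst_idx y.
Proof.
case: y => // b y _; rewrite /lst_idx /idxs map_cat last_cat /=.
by case: (map fst x) => //= c l; rewrite last_cat.
Qed.

Lemma wf_cat x y : wf x -> wf y -> ltw x y -> wf (x ++ y).
Proof.
case: x => // [[n o] x] /andP[_ sx]; case: y => // [[m o'] y] /andP[_ sy].
rewrite /ltw /wf /lst_idx /hd_idx /idxs /= in sx sy * => lt.
by rewrite map_cat cat_path sx /= lt sy.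
Qed.

Lemma ltw_tail x y : tail (lst_idx x) y -> ltw x y.
Proof. by case. Qed.

Lemma tail_ne n y : tail n y -> y != [::].
Proof. by case=> /andP[]. Qed.

Definition sumF (p r : uf) : (S -> Prop) -> Prop := fun B => p (fun x => r (shift x B)).

Lemma r_ltw (r : uf) x : r (ltw x).
Proof. apply: ufS (ufT r (lst_idx x)) _ => y; exact: ltw_tail. Qed.

Section Sum.
Variables p r : uf.
Lemma sumS B C : sumF p r B -> (forall x, B x -> C x) -> sumF p r C.
Proof.
move=> H H0; refine (ufS H _) => x h; refine (ufS h _) => y [h1 h2]; split => //; exact: H0.
Qed.
Lemma sumI B C : sumF p r B -> sumF p r C -> sumF p r (fun x => B x /\ C x).
Proof.
move=> H H0; refine (ufS (ufI H H0) _) => x [h1 h2]; refine (ufS (ufI h1 h2) _) => y [[a b] [_ c]]; by [].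
Qed.
Lemma sum0 : sumF p r (fun _ => False) -> False.
Proof.
move=> h; apply: (uf0 p); refine (ufS h _) => x /ufE [y [_ []]].
Qed.
Lemma sumU B : sumF p r B \/ sumF p r (fun x => ~ B x).
Proof.
case: (ufU p (fun x => r (shift x B))) => h; [left|right] => //.
refine (ufS h _) => x nh; rewrite /shift.
case: (ufU r (shift x B)) => // h2.
refine (ufS (ufI h2 (r_ltw r x)) _) => y [h3 h4]; split => // hb; apply: h3; by split.
Qed.
Lemma sumT n : sumF p r (tail n).
Proof.
refine (ufS (ufT p n) _) => x tx; refine (ufS (ufT r (lst_idx x)) _) => y ty.
have lt := ltw_tail ty; split => //; split.
  apply: wf_cat => //; [exact: tx.1 | exact: ty.1].
by rewrite hd_cat ?(tail_ne tx) //; exact: tx.2.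
Qed.
End Sum.
Definition usum (p r : uf) : uf := UF (sumF p r) (@sumS p r) (@sumI p r) (@sum0 p r) (@sumU p r) (@sumT p r).

Notation "p \+ r" := (usum p r) (at level 50, left associativity).

Lemma usumE (p r : uf) B : (p \+ r) B = p (fun x => r (shift x B)).
Proof. by []. Qed.

Lemma usumA (p r u : uf) : p \+ r \+ u = p \+ (r \+ u).
Proof.
apply: uf_eq => B; rewrite !usumE /=; rewrite /sumF.
split => h; refine (ufS h _) => x hx; refine (ufS (ufI hx (ufT r (lst_idx x))) _) => y [h1 ty];
  have ny := tail_ne ty; have lt := ltw_tail ty.
- refine (ufS h1.2 _) => z [h2 h3]; rewrite /ltw lst_cat // in h2.
  by rewrite /shift /ltw hd_cat // ?catA; split.
- split => //; refine (ufS h1 _) => z [h2 [h3 h4]]; split; first by rewrite /ltw lst_cat.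
  by rewrite catA in h4.
Qed.


Definition sg (a : A) (x : S) : S := map (fun pr => (pr.1, Some (odflt a pr.2))) x.

Lemma idxs_sg a x : idxs (sg a x) = idxs x.
Proof. by rewrite /idxs /sg -map_comp; apply: eq_map. Qed.
Lemma wf_sg a x : wf (sg a x) = wf x.
Proof. by rewrite /wf idxs_sg; case: x. Qed.
Lemma hd_sg a x : hd_idx (sg a x) = hd_idx x.
Proof. by rewrite /hd_idx idxs_sg. Qed.
Lemma lst_sg a x : lst_idx (sg a x) = lst_idx x.
Proof. by rewrite /lst_idx idxs_sg. Qed.
Lemma ltw_sg a x y : ltw (sg a x) (sg a y) = ltw x y.
Proof. by rewrite /ltw lst_sg hd_sg. Qed.
Lemma tail_sg a n x : tail n (sg a x) <-> tail n x.
Proof. by rewrite /tail wf_sg hd_sg. Qed.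

Section Img.
Variables (a : A) (p : uf).
Definition imF : (S -> Prop) -> Prop := fun B => p (fun x => B (sg a x)).
Lemma imS B C : imF B -> (forall x, B x -> C x) -> imF C.
Proof. move=> h H; refine (ufS h _) => x; exact: H. Qed.
Lemma imI B C : imF B -> imF C -> imF (fun x => B x /\ C x).
Proof. move=> h1 h2; exact: (ufI h1 h2). Qed.
Lemma im0 : imF (fun _ => False) -> False.
Proof. exact: uf0. Qed.
Lemma imU B : imF B \/ imF (fun x => ~ B x).
Proof. exact: (ufU p (fun x => B (sg a x))). Qed.
Lemma imT n : imF (tail n).
Proof. refine (ufS (ufT p n) _) => x; by rewrite /= tail_sg. Qed.
End Img.
Definition uimg a p : uf := UF (imF a p) (@imS a p) (@imI a p) (@im0 a p) (@imU a p) (@imT a p).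

Lemma uimg_sum a p r : uimg a (p \+ r) = uimg a p \+ uimg a r.
Proof.
apply: uf_eq => B; rewrite /= /imF /= /sumF /= /imF /=.
split => h; refine (ufS h _) => x hx; refine (ufS hx _) => y [h1 h2]; rewrite /shift.
- by rewrite ltw_sg -map_cat.
- by rewrite ltw_sg in h1; rewrite /sg map_cat.
Qed.

Definition Wset (x : S) : Prop := all (fun pr => pr.2 != None) x.
Definition Vset (x : S) : Prop := has (fun pr => pr.2 == None) x.

Lemma sgW a x : Wset x -> sg a x = x.
Proof. elim: x => //= [[n o] x] IH /andP[h1 h2]; rewrite IH //; by case: o h1. Qed.

Lemma sg_W a x : Wset (sg a x).
Proof. by rewrite /Wset /sg all_map; apply/allP. Qed.

Lemma uimg_W a p : uimg a p Wset.
Proof. refine (ufS (ufTT p) _) => x _; exact: sg_W. Qed.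

Lemma uimg_fix a (p : uf) : p Wset -> uimg a p = p.
Proof.
move=> pW; apply: uf_eq => B; rewrite /= /imF; split => h.
- refine (ufS (ufI h pW) _) => x [h1 h2]; by rewrite -(sgW a h2).
- refine (ufS (ufI h pW) _) => x [h1 h2]; by rewrite (sgW a h2).
Qed.

Lemma sum_W (p r : uf) : p Wset -> r Wset -> (p \+ r) Wset.
Proof.
move=> pW rW; refine (ufS pW _) => x wx; refine (ufS (ufI rW (r_ltw r x)) _) => y [wy l].
by split => //; rewrite /Wset all_cat; apply/andP.
Qed.

Lemma sum_Vl (p r : uf) : p Vset -> (p \+ r) Vset.
Proof.
move=> pV; refine (ufS pV _) => x vx; refine (ufS (r_ltw r x) _) => y l.
by split => //; rewrite /Vset has_cat; apply/orP; left.
Qed.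

Lemma sum_Vr (p r : uf) : r Vset -> (p \+ r) Vset.
Proof.
move=> rV; refine (ufS (ufTT p) _) => x _; refine (ufS (ufI rV (r_ltw r x)) _) => y [vy l].
by split => //; rewrite /Vset has_cat; apply/orP; right.
Qed.

Definition closed (K : uf -> Prop) :=
  forall p : uf, (forall B, p B -> exists r : uf, K r /\ r B) -> K p.

Lemma mk_uf (Fl : (S -> Prop) -> Prop) : filter.ProperFilter Fl ->
  (forall n, Fl (tail n)) -> exists p : uf, forall B, Fl B -> p B.
Proof.
move=> PF hT; have [G [UG sub]] := filter.ultraFilterLemma PF.
have GS : forall B C : S -> Prop, G B -> (forall x, B x -> C x) -> G C.
  by move=> B C h H; exact: (filter.filterS H h).
have GI : forall B C : S -> Prop, G B -> G C -> G (fun x => B x /\ C x).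
  by move=> B C h1 h2; exact: (filter.filterI h1 h2).
have G0 : G (fun _ => False) -> False.
  by move=> h; exact: (filter.filter_not_empty G h).
have GU : forall B, G B \/ G (fun x => ~ B x).
  by move=> B; exact: (filter.in_ultra_setVsetC B UG).
have GT : forall n, G (tail n) by move=> n; exact: sub (hT n).
by exists (UF G GS GI G0 GU GT).
Qed.

Lemma tail_mono n m x : n <= m -> tail m x -> tail n x.
Proof. by move=> nm [w h]; split => //; exact: leq_ltn_trans h. Qed.

Lemma exists_uf (Z : S -> Prop) : (forall n, exists x, Z x /\ tail n x) -> exists p : uf, p Z.
Proof.
move=> hZ.
pose Fl := fun B : S -> Prop => exists n, forall x, Z x -> tail n x -> B x.
have FF : filter.Filter Fl.
  split.
  - by exists 0.
  - move=> B C [n hn] [m hm]; exists (maxn n m) => x zx tx; split.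
    + by apply: hn zx (tail_mono _ tx); rewrite leq_maxl.
    + by apply: hm zx (tail_mono _ tx); rewrite leq_maxr.
  - by move=> B C BC [n hn]; exists n => x zx tx; apply: BC; exact: hn.
have PF : filter.ProperFilter Fl.
  apply: filter.Build_ProperFilter_ex => B [n hn].
  by have [x [zx tx]] := hZ n; exists x; exact: hn.
have [p hp] := mk_uf PF (fun n => ex_intro _ n (fun x _ tx => tx)).
by exists p; apply: hp; exists 0.
Qed.

Lemma compact (KK : (uf -> Prop) -> Prop) :
  (exists K, KK K) -> (forall K, KK K -> closed K /\ exists p, K p) ->
  (forall K1 K2, KK K1 -> KK K2 -> exists K3, KK K3 /\ forall p, K3 p -> K1 p /\ K2 p) ->
  exists p : uf, forall K, KK K -> K p.
Proof.
move=> [K0 hK0] hK hD.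
pose Fl := fun B : S -> Prop => exists K, KK K /\ forall r : uf, K r -> r B.
have FF : filter.Filter Fl.
  split.
  - by exists K0; split => // r _; exact: ufTT.
  - move=> B C [K1 [h1 g1]] [K2 [h2 g2]]; have [K3 [h3 g3]] := hD _ _ h1 h2.
    exists K3; split => // r /g3 [r1 r2]; exact: (ufI (g1 r r1) (g2 r r2)).
  - move=> B C BC [K [h g]]; exists K; split => // r /g rB; exact: (ufS rB BC).
have PF : filter.ProperFilter Fl.
  apply: filter.Build_ProperFilter_ex => B [K [h g]].
  have [_ [r Kr]] := hK K h; exact: ufE (g r Kr).
have [p hp] := mk_uf PF (fun n => ex_intro _ K0 (conj hK0 (fun r _ => ufT r n))).
exists p => K h; apply: (proj1 (hK K h)) => B pB.
apply: NNPP => nE; apply: (ufN pB); apply: hp; exists K; split => // r Kr.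
case: (ufU r B) => // rB; case: nE; by exists r.
Qed.

Lemma closed_clI K D : closed K -> closed (fun r : uf => K r /\ r D).
Proof.
move=> cK p hp; split.
- apply: cK => B /hp [r [[h1 _] h2]]; by exists r.
- case: (ufU p D) => // /hp [r [[_ h1] h2]]; case: (ufN h1 h2).
Qed.

Lemma closed_cl D : closed (fun r : uf => r D).
Proof.
move=> p hp; case: (ufU p D) => // /hp [r [h1 h2]]; case: (ufN h1 h2).
Qed.

Lemma closed_bigI (CC : (uf -> Prop) -> Prop) :
  (forall K, CC K -> closed K) -> closed (fun p => forall K, CC K -> K p).
Proof.
move=> hC p hp K CK; apply: (hC K CK) => B /hp [r [h1 h2]]; exists r; split => //; exact: h1.
Qed.

Lemma minimal (P : (uf -> Prop) -> Prop) :
  (forall K, P K -> closed K /\ exists p, K p) ->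
  (forall CC : (uf -> Prop) -> Prop, (exists K, CC K) -> (forall K, CC K -> P K) ->
     (exists p, forall K, CC K -> K p) -> closed (fun p => forall K, CC K -> K p) ->
     P (fun p => forall K, CC K -> K p)) ->
  (exists K, P K) ->
  exists M, P M /\ forall K, P K -> (forall p, K p -> M p) -> forall p, M p -> K p.
Proof.
move=> hP hC [K0 PK0].
pose T := {K : uf -> Prop | P K}.
pose R := fun k1 k2 : T => boolp.asbool (forall p, sval k2 p -> sval k1 p).
have [t tmax] : exists t, classical_sets.premaximal R t.
  apply: (classical_sets.ZL_preorder (exist _ K0 PK0)).
  - by move=> k; apply/boolp.asboolP.
  - move=> k1 k2 k3 /boolp.asboolP h1 /boolp.asboolP h2; apply/boolp.asboolP => p /h2; exact: h1.
  - move=> AA Atot; case: (classic (exists k, AA k)) => [[k Ak]|nA]; last first.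
      by exists (exist _ K0 PK0) => s As; case: nA; exists s.
    pose CC := fun K => exists k : T, AA k /\ sval k = K.
    have CCP : forall K, CC K -> P K by move=> K [k0 [_ <-]]; exact: (svalP k0).
    have ne : exists p, forall K, CC K -> K p.
      apply: compact.
      - by exists (sval k), k.
      - move=> K /CCP; exact: hP.
      - move=> K1 K2 [k1 [A1 <-]] [k2 [A2 <-]].
        case: (Atot _ _ A1 A2) => /boolp.asboolP h.
        + by exists (sval k2); split; [exists k2|move=> p p2; split => //; exact: h].
        + by exists (sval k1); split; [exists k1|move=> p p1; split => //; exact: h].
    have cl : closed (fun p => forall K, CC K -> K p).
      by apply: closed_bigI => K /CCP /hP [].
    have PI := hC CC (ex_intro _ (sval k) (ex_intro _ k (conj Ak erefl))) CCP ne cl.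
    exists (exist _ _ PI) => s As; apply/boolp.asboolP => p /= h; apply: h; by exists s.
exists (sval t); split; first exact: (svalP t).
move=> K PK sub p Mp.
have : R t (exist _ K PK) by apply/boolp.asboolP.
by move=> /tmax /boolp.asboolP /(_ p Mp).
Qed.

Lemma rho_closed K (x : uf) : closed K -> closed (fun y => exists z, K z /\ y = z \+ x).
Proof.
move=> cK p hp.
pose KB := fun B (z : uf) => K z /\ z (fun w => x (shift w B)).
pose KK := fun K' => exists B, p B /\ K' = KB B.
have [z hz] : exists z : uf, forall K', KK K' -> K' z.
  apply: compact.
  - by exists (KB (fun _ => True)), (fun _ => True); split => //; exact: ufTT.
  - move=> K' [B [pB ->]]; split; first exact: closed_clI.
    have [y [[z [Kz ->]] h]] := hp B pB; by exists z.
  - move=> K1 K2 [B1 [p1 ->]] [B2 [p2 ->]]; exists (KB (fun w => B1 w /\ B2 w)).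
    split; first by exists (fun w => B1 w /\ B2 w); split => //; exact: ufI.
    move=> r [Kr h]; split; split => //; refine (ufS h _) => w hw; refine (ufS hw _) => v [l [h1 h2]]; by split.
have Kz : K z by have [] := hz (KB (fun _ => True)) (ex_intro _ _ (conj (ufTT p) erefl)).
exists z; split => //; apply: uf_sub_eq => B pB.
by have [] := hz (KB B) (ex_intro _ B (conj pB erefl)).
Qed.

Lemma pre_closed K (x e : uf) : closed K -> closed (fun y => K y /\ y \+ x = e).
Proof.
move=> cK p hp; split.
- apply: cK => B /hp [r [[h1 _] h2]]; by exists r.
- apply: esym; apply: uf_sub_eq => B eB; case: (ufU (p \+ x) B) => // h.
  have [r [[_ hr] rB]] := hp _ h.
  have : (r \+ x) (fun w => ~ B w) by exact: rB.
  rewrite hr => h2; case: (ufN eB h2).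
Qed.

Lemma ellis (T : uf -> Prop) : closed T -> (exists p, T p) ->
  (forall p r, T p -> T r -> T (p \+ r)) -> exists e, T e /\ e \+ e = e.
Proof.
move=> cT neT sT.
pose P := fun K : uf -> Prop => [/\ closed K, exists p, K p,
  (forall p r, K p -> K r -> K (p \+ r)) & forall p, K p -> T p].
have [M [PM minM]] : exists M, P M /\ forall K, P K -> (forall p, K p -> M p) -> forall p, M p -> K p.
  apply: minimal.
  - by move=> K [].
  - move=> CC [K0 C0] CP ne cl; split => //.
    + move=> p r hp hr K CK; have [_ _ sK _] := CP K CK; apply: sK; [exact: hp|exact: hr].
    + move=> p /(_ K0 C0); have [_ _ _ KT] := CP K0 C0; exact: KT.
  - by exists T; split.
have [cM [x Mx] sM MT] := PM.
pose Mxs := fun y => exists z, M z /\ y = z \+ x.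
have PMx : P Mxs.
  split.
  - exact: rho_closed.
  - by exists (x \+ x), x.
  - move=> p r [z1 [h1 ->]] [z2 [h2 ->]]; exists (z1 \+ x \+ z2); split.
      by apply: (sM) => //; apply: (sM).
    by rewrite !usumA.
  - move=> p [z [h ->]]; apply: MT; exact: sM.
have [z [Mz xz]] := minM Mxs PMx (fun p '(ex_intro z (conj h e)) => eq_ind_r M (sM _ _ h Mx) e) x Mx.
pose N := fun y => M y /\ y \+ x = x.
have PN : P N.
  split.
  - exact: pre_closed.
  - by exists z.
  - move=> p r [hp ep] [hr er]; split; first exact: sM.
    by rewrite usumA er.
  - by move=> p [h _]; exact: MT.
have [_ xx] := minM N PN (fun p h => h.1) x Mx.
by exists x; split => //; exact: MT.
Qed.

Lemma tail1 n (o : option A) : tail n [:: (n.+1, o)].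
Proof. by split. Qed.

Lemma good_pair (a0 : A) : exists q p : uf,
  q Wset /\ q \+ q = q /\ p Vset /\ forall b, uimg b p = q.
Proof.
have [w0 w0W] : exists p : uf, p Wset.
  apply: exists_uf => n; exists [:: (n.+1, Some a0)]; split => //; exact: tail1.
have [v0 v0V] : exists p : uf, p Vset.
  apply: exists_uf => n; exists [:: (n.+1, None)]; split => //; exact: tail1.
pose PL := fun K : uf -> Prop => [/\ closed K, exists p, K p,
  (forall p, K p -> p Wset) & forall y z : uf, y Wset -> K z -> K (y \+ z)].
have [L [PLL minL]] : exists L, PL L /\ forall K, PL K -> (forall p, K p -> L p) -> forall p, L p -> K p.
  apply: minimal.
  - by move=> K [].
  - move=> CC [K0 C0] CP ne cl; split => //.
    + move=> p /(_ K0 C0); have [_ _ KW _] := CP K0 C0; exact: KW.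
    + move=> y z yW hz K CK; have [_ _ _ iK] := CP K CK; apply: iK => //; exact: hz.
  - exists (fun p : uf => p Wset); split => //.
    + exact: closed_cl.
    + by exists w0.
    + by move=> y z yW zW; apply: sum_W.
have [cL neL LW iL] := PLL.
have [q [Lq qq]] : exists q, L q /\ q \+ q = q.
  apply: ellis => // p r Lp Lr; apply: iL => //; exact: LW.
have qW := LW q Lq.
have qmin : forall r : uf, r Wset -> r \+ r = r -> r \+ q = r -> q \+ r = r -> r = q.
  move=> r rW rr rq qr.
  have Lr : L r by rewrite -rq; apply: iL.
  pose L' := fun y => exists z : uf, z Wset /\ y = z \+ r.
  have PL' : PL L'.
    split.
    - by apply: rho_closed; exact: closed_cl.
    - by exists r, r.
    - by move=> p [z [zW ->]]; apply: sum_W.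
    - move=> y p yW [z [zW ->]]; exists (y \+ z); split; first exact: sum_W.
      by rewrite usumA.
  have [z [zW qz]] := minL L' PL' (fun p '(ex_intro z (conj zW e)) => eq_ind_r L (iL _ _ zW Lr) e) q Lq.
  have : q \+ r = q by rewrite qz usumA rr.
  by rewrite qr.
pose T2 := fun y => exists z : uf, z Vset /\ y = z \+ q.
have [u [[z [zV uz]] uu]] : exists u, T2 u /\ u \+ u = u.
  apply: ellis.
  - by apply: rho_closed; exact: closed_cl.
  - by exists (v0 \+ q), v0.
  - move=> p r [z1 [h1 ->]] [z2 [h2 ->]]; exists (z1 \+ q \+ z2); split.
      by apply: sum_Vl; apply: sum_Vl.
    by rewrite !usumA.
have uq : u \+ q = u by rewrite uz usumA qq.
pose p := q \+ u.
have pp : p \+ p = p by rewrite /p usumA -(usumA u q u) uq uu.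
have pq : p \+ q = p by rewrite /p usumA uq.
have qp : q \+ p = p by rewrite /p -usumA qq.
exists q, p; split => //; split => //; split.
  by apply: sum_Vr; rewrite uz; apply: sum_Vl.
move=> b; apply: qmin.
- exact: uimg_W.
- by rewrite -uimg_sum pp.
- by rewrite -{1}(uimg_fix b qW) -uimg_sum pq.
- by rewrite -{1}(uimg_fix b qW) -uimg_sum qp.
Qed.

Lemma path_bounds (a : nat) (l : seq nat) : path ltn a l ->
  forall n, n \in a :: l -> a <= n <= last a l.
Proof.
elim: l a => [|b l IH] a /=.
  by move=> _ n; rewrite inE => /eqP ->; rewrite leqnn.
move=> /andP[ab pb] n; rewrite inE => /orP[/eqP ->|/(IH _ pb) /andP[h1 h2]].
- have /andP[_ h] := IH b pb b (mem_head _ _); rewrite leqnn /=; lia.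
- apply/andP; split => //; lia.
Qed.

Lemma wf_bounds x : wf x -> forall n, n \in idxs x -> hd_idx x <= n <= lst_idx x.
Proof.
case: x => // [[k o] x] /andP[_ srt] n; rewrite /hd_idx /lst_idx /idxs /= in srt *.
exact: path_bounds.
Qed.

Lemma wf_hd_lst x : wf x -> hd_idx x <= lst_idx x.
Proof.
move=> w; case: x w => // [[k o] x] w; have /andP[] := wf_bounds w (mem_head _ _); done.
Qed.

Section Construct.
Variable s : nat -> seq (option A).
Variables (q p : uf) (qq : q \+ q = q) (pV : p Vset) (pq : forall b, uimg b p = q).
Variables (a0 : A) (Cw : seq A -> Prop).

Definition eval (x : S) : seq (option A) := flatten [seq vsub (s pr.1) pr.2 | pr <- x].
Definition cev (y : S) : seq A := flatten [seq csub (s pr.1) (odflt a0 pr.2) | pr <- y].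

Lemma csub_vsub (w : seq (option A)) (o : option A) (a : A) : csub (vsub w o) a = csub w (odflt a o).
Proof. by rewrite /csub /vsub -map_comp; apply: eq_map => -[b|]; case: o. Qed.

Lemma csub_eval x a : csub (eval x) a = cev (sg a x).
Proof.
rewrite /csub /eval map_flatten -map_comp /cev /sg -map_comp; congr flatten.
by apply: eq_map => pr /=; rewrite -/(csub _ _) csub_vsub.
Qed.

Lemma cev_cat x y : cev (x ++ y) = cev x ++ cev y.
Proof. by rewrite /cev map_cat flatten_cat. Qed.

Definition C := fun y => Cw (cev y).
Hypothesis qC : q C.

Definition star (Q : S -> Prop) := fun y => Q y /\ q (shift y Q).

Lemma star_in Q : q Q -> q (star Q).
Proof. move=> hQ; have h : (q \+ q) Q by rewrite qq. exact: (ufI hQ h). Qed.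

Lemma star_sc Q y : star Q y -> q (shift y (star Q)).
Proof.
move=> [Qy hy]; have h : (q \+ q) (shift y Q) by rewrite qq.
refine (ufS (ufI3 hy h (ufT q (lst_idx y))) _) => w [[l Qw] [h2 tw]].
split => //; split => //; refine (ufS h2 _) => z [l2 [l3 Qz]]; split.
  by rewrite /ltw lst_cat // (tail_ne tw).
by rewrite -catA.
Qed.

Lemma step Q N : q Q -> exists x, Vset x /\ tail N x /\ forall b, Q (sg b x).
Proof.
move=> hQ.
have h : p (fun x => forall b, Q (sg b x)).
  apply: uf_all => b; have := hQ; rewrite -(pq b); done.
have [x [h1 [h2 h3]]] := ufE (ufI3 pV (ufT p N) h); by exists x.
Qed.

Definition pickx (Q : S -> Prop) N : S :=
  epsilon (inhabits ([::] : S)) (fun x => Vset x /\ tail N x /\ forall b, Q (sg b x)).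
Definition nextQ (Q : S -> Prop) x := star (fun y => Q y /\ forall b, shift (sg b x) Q y).

Fixpoint st n : (S -> Prop) * nat :=
  if n is n'.+1 then let x := pickx (st n').1 (st n').2 in (nextQ (st n').1 x, lst_idx x)
  else (star C, 0).

Definition X n := pickx (st n).1 (st n).2.
Definition Qn n := (st n).1.

Lemma inv n : q (Qn n) /\ (forall y, Qn n y -> q (shift y (Qn n))) /\
  (Vset (X n) /\ tail (st n).2 (X n) /\ forall b, Qn n (sg b (X n))).
Proof.
elim: n => [|n [hq [hsc hx]]].
  have h1 : q (Qn 0) by exact: star_in.
  split => //; split; first by move=> y; exact: star_sc.
  by apply: (epsilon_spec (inhabits ([::] : S)) (fun x => Vset x /\ tail _ x /\ forall b, Qn 0 (sg b x))); apply: step.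
have h1 : q (Qn n.+1).
  apply: star_in; apply: ufI => //; apply: uf_all => b; apply: hsc; exact: hx.2.2.
split => //; split; first by move=> y; exact: star_sc.
by apply: (epsilon_spec (inhabits ([::] : S)) (fun x => Vset x /\ tail _ x /\ forall b, Qn n.+1 (sg b x))); apply: step.
Qed.

Lemma Qdec n y : Qn n.+1 y -> Qn n y.
Proof. by move=> [[h _] _]. Qed.

Lemma Qsh n b y : Qn n.+1 y -> shift (sg b (X n)) (Qn n) y.
Proof. by move=> [[_ h] _]. Qed.

Lemma Qle m n y : m <= n -> Qn n y -> Qn m y.
Proof.
elim: n => [|n IH]; first by rewrite leqn0 => /eqP ->.
rewrite leq_eqVlt => /orP[/eqP -> //|]; rewrite ltnS => mn /Qdec; exact: IH.
Qed.

Lemma combo_in (ls : seq nat) (as_ : seq A) m : size ls = size as_ -> ls != [::] ->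
  sorted ltn ls -> all (leq m) ls ->
  Qn m (flatten [seq sg pr.2 (X pr.1) | pr <- zip ls as_]).
Proof.
elim: ls as_ m => // l ls IH [|a as_] m //= [sz] _ srt /andP[ml al].
case: ls IH sz srt al => [|l' ls] IH sz srt al.
  case: as_ sz => // _ /=; rewrite cats0; apply: Qle ml _; exact: (inv l).2.2.2.2 a.
have hmin := order_path_min ltn_trans srt.
have := IH as_ l.+1 sz isT (path_sorted srt) hmin.
move=> /(Qsh a) [_ h]; apply: Qle ml h.
Qed.

Definition tt_ n := eval (X n).

Lemma span_eq (z : seq (nat * A)) :
  flatten [seq csub (tt_ pr.1) pr.2 | pr <- z] = cev (flatten [seq sg pr.2 (X pr.1) | pr <- z]).
Proof.
elim: z => [|[l a] z IH] //=; by rewrite cev_cat IH csub_eval.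
Qed.

Lemma X_wf n : wf (X n).
Proof. by have [_ [_ [_ [[w _] _]]]] := inv n. Qed.

Lemma construct : exists t, extracted t s /\ forall u, cspan t predT u -> Cw u.
Proof.
exists tt_; split.
- move=> l; exists (fun i => if i is i'.+1 then (lst_idx (X i')).+1 else 0); split => //.
  have hb : forall i, lst_idx (X i) < hd_idx (X i.+1).
    by move=> i; have [_ [_ [_ [[_ h] _]]]] := inv i.+1.
  split.
  + move=> [|i] _ //; rewrite ltnS; apply: leq_trans (hb i) (wf_hd_lst (X_wf _)).
  + move=> i _; exists (idxs (X i)), (map snd (X i)); split; first by rewrite /idxs !size_map.
    have w := X_wf i; split; first by case: (X i) w.
    split; first by case/andP: w.
    split.
      apply/allP => n /(wf_bounds w) /andP[h1 h2]; apply/andP; split; last by rewrite ltnS.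
      case: i w h1 h2 => // i w h1 _; apply: leq_trans (hb i) h1.
    split.
      have [_ [_ [V _]]] := inv i; case/hasP: V => pr pin /eqP e.
      by apply/mapP; exists pr.
    by rewrite /tt_ /eval -/(unzip1 _) -/(unzip2 _) zip_unzip.
- move=> u [ls [as_ [sz [pos [srt [_ ->]]]]]].
  rewrite span_eq.
  have ne : ls != [::] by case: ls pos sz srt.
  have := combo_in sz ne srt (introT allP (fun x _ => leq0n x)).
  by move=> [h _].
Qed.

End Construct.
End UF.

Unset Implicit Arguments.
Set Strict Implicit.

Theorem corollary2p11 (A : finType) (hA : 0 < #|A|)
  (E : seq A -> Prop) (s : nat -> seq (option A))
  (hs : forall n, is_varword (s n))
  (hlarge : large E s) :
  exists t : nat -> seq (option A),
    extracted t s /\ (forall u, cspan t predT u -> E u).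
Proof.
case/card_gt0P: hA => a0 _.
have [q [p [qW [qq [pV pq]]]]] := good_pair a0.
case: (ufU _ q (fun y => E (cev s a0 y))) => h.
- exact: (construct qq pV pq (Cw := E) h).
- have [t [et ht]] := construct qq pV pq (Cw := fun u => ~ E u) h.
  have [u [Eu cu]] := hlarge t et.
  case: (ht u cu Eu).
Qed.
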